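(* Let $\mathcal{H}$ be a hereditary $\sigma$-ring of sets, let $\mu^*$ be an outer measure on $\mathcal{H}$, let $X$ be a set with $X\cap\bigcup\mathcal{H}\neq\emptyset$, and let $\overline{\overline{S}}$ be the class of all $\mu^{**}$-measurable sets. Then $\overline{\overline{S}}$ is a ring of sets, i.e. $L\cup M\in\overline{\overline{S}}$ and $M-L\in\overline{\overline{S}}$ whenever $L,M\in\overline{\overline{S}}$.
   Context: A nonempty class $\mathcal{E}$ of sets is hereditary if $F\in\mathcal{E}$ whenever $E\in\mathcal{E}$ and $F\subseteq E$. A set $E\in\mathcal{H}$ is $\mu^*$-measurable if $\mu^*(A)=\mu^*(A\cap E)+\mu^*(A\cap E')$ for every $A\in\mathcal{H}$, where $E'$ denotes the complement of $E$. Let $\overline{S}$ denote the class of all $\mu^*$-measurable sets. Let $K=\{B\subseteq X: B\cap E\in\mathcal{H}\text{ for all }E\in\mathcal{H}\}$. A set $Q\in K$ is called $\mu^{**}$-measurable if $Q\cap E$ is $\mu^*$-measurable for every $\mu^*$-measurable $E\in\mathcal{H}$, i.e. for all $A\in\mathcal{H}$ and all $E\in\overline{S}$, $\mu^*(A)=\mu^*[A\cap(Q\cap E)]+\mu^*[A\cap(Q\cap E)']$. *)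

(* Defs.v *)
From HB Require Import structures.
From mathcomp Require Import all_boot all_order all_algebra.
From mathcomp Require Import boolp classical_sets functions reals constructive_ereal ereal sequences.
Set Implicit Arguments. Unset Strict Implicit. Unset Printing Implicit Defensive.
Import Order.TTheory GRing.Theory Num.Theory.
Local Open Scope classical_set_scope.
Local Open Scope ereal_scope.

Definition hereditary {T} (H : set (set T)) : Prop :=
  H !=set0 /\ (forall E F, H E -> F `<=` E -> H F).

Definition sigma_ring {T} (H : set (set T)) : Prop :=
  [/\ H !=set0,
      (forall E F, H E -> H F -> H (E `\` F)) &
      (forall F : nat -> set T, (forall n, H (F n)) -> H (\bigcup_n F n))].

Definition outer_measure_on {T} {R : realType} (H : set (set T))
    (mu : set T -> \bar R) : Prop :=
  [/\ mu set0 = 0,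
      (forall A, H A -> 0 <= mu A),
      (forall A B, H A -> H B -> A `<=` B -> mu A <= mu B) &
      (forall F : nat -> set T, (forall n, H (F n)) ->
         mu (\bigcup_n F n) <= \sum_(0 <= n <oo) mu (F n))].

Definition mu_measurable {T} {R : realType} (H : set (set T))
    (mu : set T -> \bar R) (E : set T) : Prop :=
  H E /\ forall A, H A -> mu A = mu (A `&` E) + mu (A `&` ~` E).

Definition classK {T} (H : set (set T)) (X : set T) : set (set T) :=
  [set B | B `<=` X /\ forall E, H E -> H (B `&` E)].

Definition mu2_measurable {T} {R : realType} (H : set (set T))
    (mu : set T -> \bar R) (X : set T) (Q : set T) : Prop :=
  classK H X Q /\
  forall A E, H A -> mu_measurable H mu E ->
    mu A = mu (A `&` (Q `&` E)) + mu (A `&` ~` (Q `&` E)).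

(* Main.v *)
Require Import Defs.
From HB Require Import structures.
From mathcomp Require Import all_boot all_order all_algebra.
From mathcomp Require Import boolp classical_sets functions reals constructive_ereal ereal sequences.
Import Order.TTheory GRing.Theory Num.Theory.
Local Open Scope classical_set_scope.
Local Open Scope ereal_scope.
Set Implicit Arguments.

Ltac setsolve E F A := apply/funext; let x := fresh "x" in intro x; apply/propext;
  rewrite /setI /setU /setC /setD /=;
  case: (pselect (E x)); case: (pselect (F x)); case: (pselect (A x)); tauto.

Lemma meas_union (T : Type) (R : realType) (H : set (set T))
    (mu : set T -> \bar R) E F :
  hereditary H -> mu_measurable H mu E -> mu_measurable H mu F ->
  H (E `|` F) -> mu_measurable H mu (E `|` F).
Proof.
move=> [_ hH] [HE mE] [HF mF] HEF; split => // A HA.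
have HA1 : H (A `&` ~` E) by apply: hH HA _; apply: subIsetl.
rewrite (mE A HA) (mF _ HA1).
have HA2 : H (A `&` (E `|` F)) by apply: hH HA _; apply: subIsetl.
rewrite (mE _ HA2).
have -> : A `&` (E `|` F) `&` E = A `&` E by setsolve E F A.
have -> : A `&` (E `|` F) `&` ~` E = A `&` ~` E `&` F by setsolve E F A.
have -> : A `&` ~` (E `|` F) = A `&` ~` E `&` ~` F by setsolve E F A.
by rewrite addeA.
Qed.

Lemma meas_diff (T : Type) (R : realType) (H : set (set T))
    (mu : set T -> \bar R) E F :
  hereditary H -> mu_measurable H mu E -> mu_measurable H mu F ->
  H (E `\` F) -> mu_measurable H mu (E `\` F).
Proof.
move=> [_ hH] [HE mE] [HF mF] HEF; split => // A HA.
have HA1 : H (A `&` E) by apply: hH HA _; apply: subIsetl.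
rewrite (mE A HA) (mF _ HA1).
have HA2 : H (A `&` ~` (E `\` F)) by apply: hH HA _; apply: subIsetl.
rewrite [mu (A `&` ~` (E `\` F))](mE _ HA2).
have -> : A `&` ~` (E `\` F) `&` E = A `&` E `&` F by setsolve E F A.
have -> : A `&` ~` (E `\` F) `&` ~` E = A `&` ~` E by setsolve E F A.
have -> : A `&` (E `\` F) = A `&` E `&` ~` F by setsolve E F A.
by rewrite addeCA addeA.
Qed.

Lemma mu2_meas (T : Type) (R : realType) (H : set (set T))
    (mu : set T -> \bar R) X Q E :
  mu2_measurable H mu X Q -> mu_measurable H mu E -> mu_measurable H mu (Q `&` E).
Proof.
move=> [[_ KQ] mQ] mE; split; first by apply: KQ; case: mE.
by move=> A HA; apply: mQ.
Qed.

Theorem theorem3p1 (T : Type) (R : realType) (H : set (set T))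
    (mu : set T -> \bar R) (X : set T) :
  hereditary H -> sigma_ring H -> outer_measure_on H mu ->
  X `&` \bigcup_(E in H) E !=set0 ->
  forall L M, mu2_measurable H mu X L -> mu2_measurable H mu X M ->
    mu2_measurable H mu X (L `|` M) /\ mu2_measurable H mu X (M `\` L).
Proof.
move=> her _ _ _ L M mL mM.
have hH := her.2.
have [[LX _] _] := mL; have [[MX _] _] := mM.
split; split.
- split; first by move=> x [/LX|/MX].
  by move=> E HE; apply: hH HE _; apply: subIsetr.
- move=> A E HA mE.
  have HLME : H ((L `|` M) `&` E) by apply: hH mE.1 _; apply: subIsetr.
  have := meas_union her (mu2_meas mL mE) (mu2_meas mM mE).
  rewrite -setIUl => /(_ HLME) [_]; exact.
- split; first by move=> x [/MX].
  by move=> E HE; apply: hH HE _; apply: subIsetr.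
- move=> A E HA mE.
  have HLME : H ((M `\` L) `&` E) by apply: hH mE.1 _; apply: subIsetr.
  have := meas_diff her (mu2_meas mM mE) (mu2_meas mL mE).
  have -> : M `&` E `\` L `&` E = (M `\` L) `&` E by setsolve M L E.
  move=> /(_ HLME) [_]; exact.
Qed.
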